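(* Let $G$ be a reaction network whose stoichiometric subspace is one-dimensional. If $cap_{pos}(G)<+\infty$, then $cap_{nondeg}(G)=cap_{pos}(G)$.
   Context: A reaction network $G$ has species $X_1,\dots,X_s$ and $m$ reactions $\sum_{i}\alpha_{ij}X_i\to\sum_i\beta_{ij}X_i$, with $\alpha_{ij},\beta_{ij}\in\mathbb Z_{\ge0}$ and $(\alpha_{1j},\dots,\alpha_{sj})\neq(\beta_{1j},\dots,\beta_{sj})$. The stoichiometric matrix $\mathcal N$ has entries $\beta_{ij}-\alpha_{ij}$; its image $S$ is the stoichiometric subspace. For $\kappa\in\mathbb R^m_{>0}$, mass-action kinetics gives $\dot x=f(\kappa;x)=\mathcal N(\kappa_1\prod_i x_i^{\alpha_{i1}},\dots,\kappa_m\prod_i x_i^{\alpha_{im}})^\top$. Stoichiometric compatibility classes are the sets $(x^0+S)\cap\mathbb R^s_{\ge0}$. A steady state is $x\in\mathbb R^s_{\ge0}$ with $f(\kappa;x)=0$; positive if $x\in\mathbb R^s_{>0}$; nondegenerate if $\mathrm{Jac}_f(x)(S)=S$. $cap_{pos}(G)$ (resp. $cap_{nondeg}(G)$) is the maximal $N\in\mathbb Z_{\ge0}\cup\{+\infty\}$ such that for some $\kappa$ and some compatibility class, $G$ has $N$ positive (resp. nondegenerate positive) steady states in that class. *)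

(* Defs.v *)
From HB Require Import structures.
From mathcomp Require Import all_boot all_order all_algebra.
From mathcomp Require Import all_classical all_reals all_analysis.
Set Implicit Arguments. Unset Strict Implicit. Unset Printing Implicit Defensive.
Import Order.TTheory GRing.Theory Num.Theory.
Import numFieldNormedType.Exports.
Local Open Scope ring_scope.

Section RN.
Variables (R : realType) (s m : nat).
(* A reaction network with species X_1..X_s (indices 'I_s) and m reactions
   (indices 'I_m): reaction j is  sum_i alpha i j X_i -> sum_i beta i j X_i. *)
Variables (alpha beta : 'M[nat]_(s, m)).

Definition stoich : 'M[R]_(s, m) :=
  \matrix_(i, j) ((beta i j)%:R - (alpha i j)%:R).

(* Vectors in R^s are row vectors 'rV[R]_s; the stoichiometric subspace
   S = im N is the row space of N^T (mxalgebra). *)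
Definition in_stoich_subspace (v : 'rV[R]_s) : bool := (v <= stoich^T)%MS.

(* mass-action vector field f(kappa; x) = N (kappa_j prod_i x_i^alpha_ij)_j,
   written for row vectors: f^T = v^T N^T *)
Definition massaction (kappa : 'rV[R]_m) (x : 'rV[R]_s) : 'rV[R]_s :=
  (\row_j (kappa 0 j * \prod_i (x 0 i) ^+ (alpha i j))) *m stoich^T.

Definition jac (f : 'rV[R]_s -> 'rV[R]_s) (x : 'rV[R]_s) : 'M[R]_s :=
  \matrix_(i, k) ('D_(delta_mx 0 k) f x) 0 i.

Definition nonneg_vec (x : 'rV[R]_s) : Prop := forall i, 0 <= x 0 i.
Definition pos_vec (x : 'rV[R]_s) : Prop := forall i, 0 < x 0 i.

Definition compat_class (x0 : 'rV[R]_s) : set 'rV[R]_s :=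
  [set x | in_stoich_subspace (x - x0) /\ nonneg_vec x].

Definition steady_state (kappa : 'rV[R]_m) (x : 'rV[R]_s) : Prop :=
  nonneg_vec x /\ massaction kappa x = 0.

(* nondegenerate: Jac_f(x)(S) = S  (image of S under the Jacobian) *)
Definition nondegenerate (kappa : 'rV[R]_m) (x : 'rV[R]_s) : Prop :=
  (stoich^T *m (jac (massaction kappa) x)^T == stoich^T)%MS.

Definition pos_ss (kappa : 'rV[R]_m) (x0 : 'rV[R]_s) : set 'rV[R]_s :=
  [set x | compat_class x0 x /\ steady_state kappa x /\ pos_vec x].

Definition nondeg_pos_ss (kappa : 'rV[R]_m) (x0 : 'rV[R]_s) : set 'rV[R]_s :=
  [set x | pos_ss kappa x0 x /\ nondegenerate kappa x].

Definition pos_rates (kappa : 'rV[R]_m) : Prop := forall j, 0 < kappa 0 j.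

End RN.

Definition has_card (T : eqType) (A : set T) (n : nat) : Prop :=
  exists l : seq T, [/\ uniq l, size l = n & forall x, A x <-> x \in l].

(* cap_is Cnt n  <->  the capacity (max over admissible kappa and classes x0
   of the number of elements of Cnt kappa x0, in Z>=0 ∪ {+oo}) equals the
   finite value n: the value n is attained, and every such set is finite
   with at most n elements. *)
Definition cap_is (R : realType) (s m : nat)
  (Cnt : 'rV[R]_m -> 'rV[R]_s -> set 'rV[R]_s) (n : nat) : Prop :=
  (exists kappa x0, pos_rates kappa /\ has_card (Cnt kappa x0) n) /\
  (forall kappa x0, pos_rates kappa ->
     exists2 k, (k <= n)%N & has_card (Cnt kappa x0) k).

(* Main.v *)
Require Import Defs.
From HB Require Import structures.
From mathcomp Require Import all_boot all_order all_algebra.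
From mathcomp Require Import all_classical all_reals all_analysis.
From mathcomp Require Import ring lra zify.
Set Implicit Arguments. Unset Strict Implicit. Unset Printing Implicit Defensive.
Import Order.TTheory GRing.Theory Num.Theory.
Import numFieldNormedType.Exports.
Local Open Scope ring_scope.
Local Open Scope classical_set_scope.
Local Open Scope ring_scope.

Definition ev (R : realType) (P : R -> Prop) :=
  exists2 e : R, 0 < e & forall r, 0 < r -> r < e -> P r.

Lemma ev_and (R : realType) (P Q : R -> Prop) : ev P -> ev Q -> ev (fun r => P r /\ Q r).
Proof.
move=> [e1 e1p H1] [e2 e2p H2]; exists (Num.min e1 e2); first by rewrite lt_min e1p e2p.
by move=> r r0; rewrite lt_min => /andP[r1 r2]; split; [apply: H1|apply: H2].
Qed.

Lemma ev_all (R : realType) (T : eqType) (l : seq T) (P : T -> R -> Prop) :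
  (forall x, x \in l -> ev (P x)) -> ev (fun r => forall x, x \in l -> P x r).
Proof.
elim: l => [|a l IH] Hl.
  by exists 1 => // r _ _ x; rewrite in_nil.
have [e ep He] := ev_and (Hl a (mem_head a l)) (IH (fun x xl => Hl x (ltac:(by rewrite in_cons xl orbT)))).
exists e => // r r0 re x; rewrite in_cons => /orP[/eqP->|xl].
  by have [] := He r r0 re.
by have [_ ] := He r r0 re; apply.
Qed.

Lemma ev_lt (R : realType) (d : R) : 0 < d -> ev (fun r => r < d).
Proof. by move=> d0; exists d. Qed.

Lemma ev_imp (R : realType) (P Q : R -> Prop) : (forall r, 0 < r -> P r -> Q r) -> ev P -> ev Q.
Proof. by move=> PQ [e ep He]; exists e => // r r0 re; apply: PQ => //; apply: He. Qed.

Lemma ev_ex (R : realType) (P : R -> Prop) : ev P -> exists r, 0 < r /\ P r.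
Proof.
move=> [e ep He]; exists (e / 2); split; first by rewrite divr_gt0.
by apply: He; [rewrite divr_gt0|rewrite ltr_pdivrMr // ltr_pMr // ltr1n].
Qed.

Lemma ivt_poly (R : realType) (F : {poly R}) (a b : R) :
  a < b -> F.[a] * F.[b] < 0 -> exists u, (a < u /\ u < b) /\ F.[u] = 0.
Proof.
move=> ab Hab.
have cF : {within `[a, b], continuous (horner F)}.
  by apply: continuous_subspaceT => x; apply: continuous_horner.
have Hv : Num.min F.[a] F.[b] <= 0 <= Num.max F.[a] F.[b].
  by case: (leP F.[a] F.[b]) => Fab; apply/andP; split; rewrite leNgt; apply/negP => H0; move: Hab; nra.
have [u uab Fu] := IVT (ltW ab) cF Hv.
exists u; split => //.
move: uab; rewrite in_itv /= => /andP[au ub]; split.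
  by rewrite lt_neqAle au andbT; apply/eqP => ea; move: Hab; rewrite ea Fu mul0r ltxx.
by rewrite lt_neqAle ub andbT; apply/eqP => eb; move: Hab; rewrite -eb Fu mulr0 ltxx.
Qed.

Lemma Wzero_const (R : realType) (H Q : {poly R}) (t1 r : R) :
  (forall u, t1 <= u -> u <= t1 + r -> 0 < Q.[u]) -> H.[t1] = 0 ->
  H^`() * Q - H * Q^`() = 0 -> forall u, t1 <= u -> u <= t1 + r -> H.[u] = 0.
Proof.
move=> Qp Ht1 W0 u u1 u2.
case: (eqVneq u t1) => [->//|ut].
have tu : t1 < u by rewrite lt_neqAle eq_sym ut u1.
pose phi := (horner H) * (fun y => (horner Q y)^-1).
have dphi : forall y, t1 <= y -> y <= u -> is_derive y (1:R) phi 0.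
  move=> y y1 y2.
  have Qy : Q.[y] != 0 by rewrite gt_eqF // Qp // (le_trans y2 u2).
  have dH := @derivable_horner R H y; have dQ := @derivable_horner R Q y.
  have dV : derivable (fun y => (horner Q y)^-1) y 1 := derivableV Qy dQ.
  apply: DeriveDef; first exact: derivableM.
  rewrite deriveM // deriveV //= -!derive1E -!derivE.
  have := congr1 (horner^~ y) W0; rewrite !hornerE /= => Wy.
  rewrite /GRing.scale /=.
  have -> : H.[y] * (- Q.[y] ^- 2 * Q^`().[y]) + Q.[y]^-1 * H^`().[y]
     = (H^`().[y] * Q.[y] - H.[y] * Q^`().[y]) / Q.[y] ^+ 2 by field.
  by rewrite Wy mul0r.
have cphi : {within `[t1, u], continuous phi}.
  apply: derivable_within_continuous => y; rewrite in_itv /= => /andP[y1 y2].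
  by have [] := dphi y y1 y2.
have [c cI] := @MVT R phi (fun _ => 0) t1 u tu
  (fun x xin => dphi x (ltW (andP (xin : _ && _)).1) (ltW (andP (xin : _ && _)).2)) cphi.
rewrite mul0r => /eqP; rewrite subr_eq0 => /eqP.
change (H.[u] * Q.[u]^-1 = H.[t1] * Q.[t1]^-1 -> H.[u] = 0).
rewrite Ht1 mul0r => /eqP; rewrite mulf_eq0 invr_eq0 => /orP[/eqP//|/eqP Qu].
by move: (Qp u u1 u2); rewrite Qu ltxx.
Qed.

Lemma pigeon (R : realType) (H Q W : {poly R}) (cs : seq R) :
  W != 0 -> uniq cs ->
  (forall c, c \in cs -> exists z, [/\ W.[z] = 0, Q.[z] != 0 & H.[z] = c * Q.[z]]) ->
  (size cs < size W)%N.
Proof.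
move=> W0 ucs Hc.
suff [zs [uz sz rz]] : exists zs : seq R, [/\ uniq zs, size zs = size cs &
    forall z, z \in zs -> W.[z] = 0 /\ H.[z] / Q.[z] \in cs].
  rewrite -sz; apply: max_poly_roots W0 _ uz.
  by apply/allP => z /rz [Wz _]; apply/rootP.
elim: cs ucs Hc => [|c cs IH] /= ucs Hc; first by exists [::].
move/andP: ucs => [ncs ucs].
have [zs [uz sz rz]] := IH ucs (fun c' h => Hc c' (ltac:(by rewrite in_cons h orbT))).
have [z [Wz Qz Hz]] := Hc c (mem_head _ _).
exists (z :: zs); split => /=.
- rewrite uz andbT; apply/negP => zin; have [_] := rz z zin.
  by rewrite Hz mulfK // (negbTE ncs).
- by rewrite sz.
- move=> z'; rewrite in_cons => /orP[/eqP->|z'in].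
    by split => //; rewrite Hz mulfK // mem_head.
  by have [? ?] := rz z' z'in; split => //; rewrite in_cons; apply/orP; right.
Qed.

Lemma core (R : realType) (H Q : {poly R}) (I : R -> Prop) (ts : seq R) (K : R) :
  0 < K ->
  (forall t, I t -> ev (fun r => forall u, t - r <= u -> u <= t + r -> I u)) ->
  (forall t, I t -> 0 < Q.[t]) ->
  uniq ts ->
  (forall t, t \in ts -> I t /\ H.[t] = 0) ->
  (forall t, I t -> H.[t] = 0 -> t \in ts) ->
  exists c, `|c| < K /\
    (exists us : seq R, [/\ uniq us, (size ts <= size us)%N &
        forall u, u \in us -> I u /\ (H - c *: Q).[u] = 0]) /\
    (forall t, I t -> (H - c *: Q).[t] = 0 -> (H - c *: Q)^`().[t] != 0).
Proof.
move=> K0 Inear Qpos uts Hts Hroots.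
case E: ts => [|t1 ts'].
  exists 0; split; first by rewrite normr0.
  split; first by exists [::].
  by move=> t It; rewrite scale0r subr0 => /(Hroots t It); rewrite E.
rewrite -E.
pose W := H^`() * Q - H * Q^`().
have W0 : W != 0.
  apply/eqP => W0.
  have [It1 Ht1] := Hts t1 (ltac:(by rewrite E mem_head)).
  have [r [r0 Hr]] := ev_ex (Inear t1 It1).
  have Hz : forall u, t1 <= u -> u <= t1 + r -> H.[u] = 0.
    apply: (Wzero_const (Q:=Q) (r:=r)) => // u u1 u2; apply: Qpos; apply: Hr => //.
    lra.
  pose us := [seq t1 + r / (k.+1)%:R | k <- iota 0 (size ts).+1].
  have : (size us <= size ts)%N.
    apply: uniq_leq_size.
      rewrite map_inj_uniq ?iota_uniq // => k1 k2 /addrI /mulfI.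
      move=> /(_ (lt0r_neq0 r0)) /invr_inj /eqP; rewrite eqr_nat eqSS => /eqP //.
    move=> u /mapP[k _ ->].
    have h1 : 0 < r / (k.+1)%:R by rewrite divr_gt0 // ltr0n.
    have h2 : r / (k.+1)%:R <= r.
      by rewrite ler_pdivrMr ?ltr0n // ler_peMr ?(ltW r0) // ler1n.
    move: h1 h2; set q := r / _ => h1 h2.
    apply: Hroots; first by apply: Hr; lra.
    by apply: Hz; lra.
  by rewrite size_map size_iota ltnn.
have evr : ev (fun r => (forall t, t \in ts -> forall u, t - r <= u -> u <= t + r -> I u) /\
   (forall t, t \in ts -> forall t', t' \in ts -> t != t' -> r * 2 < `|t - t'|)).
  apply: ev_and.
    by apply: ev_all => t tin; exact: Inear (Hts t tin).1.
  apply: ev_all => t tin; apply: ev_all => t' t'in.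
  case: (eqVneq t t') => [->|ne].
    by exists 1 => // r _ _; rewrite eqxx.
  apply: ev_imp (ev_lt (d := `|t - t'| / 2) _).
    by move=> r _ rd _; rewrite -ltr_pdivlMr.
  by rewrite divr_gt0 // normr_gt0 subr_eq0.
have [r [r0 [Hr Hgap]]] := ev_ex evr.
have close : forall t t' u, t \in ts -> t' \in ts -> t - r < u -> u < t + r ->
    t' - r < u -> u < t' + r -> t = t'.
  move=> t t' u tin t'in *; case: (eqVneq t t') => [//|ne].
  by have := Hgap t tin t' t'in ne; rewrite ltr_normr => /orP[] ?; exfalso; lra.
have Hnz : forall t, t \in ts -> H.[t - r] != 0 /\ H.[t + r] != 0.
  move=> t tin; split; apply/eqP => H0.
    have tin' := Hroots _ (Hr t tin (t - r) (lexx _) (ltac:(lra))) H0.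
    have := Hgap t tin _ tin' (ltac:(rewrite eq_sym subr_eq addrC -subr_eq subrr eq_sym; exact: lt0r_neq0)).
    by rewrite opprB addrC subrK ger0_norm ?(ltW r0) //; lra.
  have tin' := Hroots _ (Hr t tin (t + r) (ltac:(lra)) (lexx _)) H0.
  have := Hgap t tin _ tin' (ltac:(rewrite eq_sym -subr_eq0 addrC addKr; exact: lt0r_neq0)).
  by rewrite opprD addrA subrr sub0r normrN ger0_norm ?(ltW r0) //; lra.

pose a t := H.[t - r] / Q.[t - r].
pose b t := H.[t + r] / Q.[t + r].
have Qm : forall t, t \in ts -> 0 < Q.[t - r] /\ 0 < Q.[t + r] /\ 0 < Q.[t].
  move=> t tin; split; last split; apply: Qpos; apply: (Hr t tin); lra.
have anz : forall t, t \in ts -> a t != 0.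
  move=> t tin; rewrite mulf_neq0 ?invr_eq0 ?(Hnz t tin).1 //.
  by have [q _] := Qm t tin; rewrite gt_eqF.
have bnz : forall t, t \in ts -> b t != 0.
  move=> t tin; rewrite mulf_neq0 ?invr_eq0 ?(Hnz t tin).2 //.
  by have [_ [q _]] := Qm t tin; rewrite gt_eqF.
have evc : ev (fun c => (forall t, t \in ts -> c < `|a t| /\ c < `|b t|) /\ c < K).
  apply: ev_and; last exact: ev_lt.
  apply: ev_all => t tin; apply: ev_and; apply: ev_lt; rewrite normr_gt0.
    exact: anz.
  exact: bnz.
case: evc => e e0 He.
pose pa (sg : bool) t := if sg then 0 < a t else a t < 0.
pose pb (sg : bool) t := if sg then 0 < b t else b t < 0.
have [sg Hsg] : exists sg, (size ts <= count (pa sg) ts + count (pb sg) ts)%N.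
  have ca : count (pa false) ts = (size ts - count (pa true) ts)%N.
    rewrite -(count_predC (pa true) ts) addKn; apply: eq_in_count => t tin /=; rewrite /pa.
    by rewrite -leNgt le_eqVlt (negbTE (anz t tin)).
  have cb : count (pb false) ts = (size ts - count (pb true) ts)%N.
    rewrite -(count_predC (pb true) ts) addKn; apply: eq_in_count => t tin /=; rewrite /pb.
    by rewrite -leNgt le_eqVlt (negbTE (bnz t tin)).
  have := count_size (pa true) ts; have := count_size (pb true) ts.
  case: (leqP (size ts) (count (pa true) ts + count (pb true) ts)) => h.
    by exists true.
  by move=> h1 h2; exists false; rewrite ca cb; lia.
pose sgn : R := if sg then 1 else -1.
have sgn0 : sgn != 0 by rewrite /sgn; case: (sg); rewrite ?oppr_eq0 oner_eq0.
pose bad c := exists z, [/\ W.[z] = 0, Q.[z] != 0 & H.[z] = c * Q.[z]].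
pose cs := [seq sgn * (e / (k.+2)%:R) | k <- iota 0 (size W)].
have [c [cin nbad]] : exists c, c \in cs /\ ~ bad c.
  apply: contrapT => Hn.
  have : (size cs < size W)%N.
    apply: (pigeon (H:=H) (Q:=Q) W0).
      rewrite map_inj_uniq ?iota_uniq // => k1 k2 /(mulfI sgn0) /(mulfI (lt0r_neq0 e0)).
      move=> /invr_inj /eqP; rewrite eqr_nat !eqSS => /eqP //.
    by move=> c cin; apply: contrapT => nb; apply: Hn; exists c; split.
  by rewrite size_map size_iota ltnn.
have [c' [c'0 c'e cE]] : exists c', [/\ 0 < c', c' < e & c = sgn * c'].
  move: cin => /mapP[k _ ->]; exists (e / (k.+2)%:R); split => //.
    by rewrite divr_gt0 // ltr0n.
  by rewrite ltr_pdivrMr ?ltr0n // ltr_pMr // ltr1n.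
have [Hab c'K] := He c' c'0 c'e.

have hF : forall x, (H - c *: Q).[x] = H.[x] - c * Q.[x].
  by move=> x; rewrite hornerD hornerN hornerZ.
have Lroot : forall t, t \in ts -> pa sg t ->
    exists u, (t - r < u /\ u < t) /\ (H - c *: Q).[u] = 0.
  move=> t tin pt; apply: ivt_poly; first lra.
  have [q1 [q2 q3]] := Qm t tin; have [_ Ht] := Hts t tin.
  rewrite !hF Ht.
  have -> : H.[t - r] = a t * Q.[t - r] by rewrite /a mulfVK // gt_eqF.
  have [ca _] := Hab t tin.
  move: pt ca q1 q3; rewrite /pa cE /sgn; set A := a t; set Q1 := Q.[t - r]; set Q3 := Q.[t].
  case: (sg) => pt ca q1 q3.
    rewrite gtr0_norm // in ca.
    have h := mulr_gt0 (mulr_gt0 (ltac:(lra) : 0 < A - c') q1) (mulr_gt0 c'0 q3).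
    nra.
  rewrite ltr0_norm // in ca.
  have h := mulr_gt0 (mulr_gt0 (ltac:(lra) : 0 < -(A + c')) q1) (mulr_gt0 c'0 q3).
  nra.
have Rroot : forall t, t \in ts -> pb sg t ->
    exists u, (t < u /\ u < t + r) /\ (H - c *: Q).[u] = 0.
  move=> t tin pt; apply: ivt_poly; first lra.
  have [q1 [q2 q3]] := Qm t tin; have [_ Ht] := Hts t tin.
  rewrite !hF Ht.
  have -> : H.[t + r] = b t * Q.[t + r] by rewrite /b mulfVK // gt_eqF.
  have [_ ca] := Hab t tin.
  move: pt ca q2 q3; rewrite /pb cE /sgn; set A := b t; set Q1 := Q.[t + r]; set Q3 := Q.[t].
  clear q1; case: (sg) => pt ca q1 q3.
    rewrite gtr0_norm // in ca.
    have h := mulr_gt0 (mulr_gt0 (ltac:(lra) : 0 < A - c') q1) (mulr_gt0 c'0 q3).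
    nra.
  rewrite ltr0_norm // in ca.
  have h := mulr_gt0 (mulr_gt0 (ltac:(lra) : 0 < -(A + c')) q1) (mulr_gt0 c'0 q3).
  nra.

pose PL t u := (t - r < u /\ u < t) /\ (H - c *: Q).[u] = 0.
pose PR t u := (t < u /\ u < t + r) /\ (H - c *: Q).[u] = 0.
pose uL t := match pselect (exists u, PL t u) with left h => proj1_sig (cid h) | right _ => 0 end.
pose uR t := match pselect (exists u, PR t u) with left h => proj1_sig (cid h) | right _ => 0 end.
have uLP : forall t, t \in ts -> pa sg t -> PL t (uL t).
  move=> t tin pt; rewrite /uL; case: pselect => [h|[]]; first exact: (proj2_sig (cid h)).
  exact: Lroot.
have uRP : forall t, t \in ts -> pb sg t -> PR t (uR t).
  move=> t tin pt; rewrite /uR; case: pselect => [h|[]]; first exact: (proj2_sig (cid h)).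
  exact: Rroot.
exists c; split.
  by rewrite cE normrM /sgn; case: (sg); rewrite ?normrN normr1 mul1r gtr0_norm.
split.
  exists ([seq uL t | t <- [seq t <- ts | pa sg t]] ++ [seq uR t | t <- [seq t <- ts | pb sg t]]).
  split.
  - rewrite cat_uniq; apply/and3P; split.
    + rewrite map_inj_in_uniq ?filter_uniq // => t t'.
      rewrite !mem_filter => /andP[pt tin] /andP[pt' t'in] E1.
      have [[h1 h2] _] := uLP t tin pt; have [[h3 h4] _] := uLP t' t'in pt'.
      by apply: (close t t' (uL t)) => //; lra.
    + apply/hasPn => u /mapP[t']; rewrite mem_filter => /andP[pt' t'in] ->.
      apply/mapP => [[t]]; rewrite mem_filter => /andP[pt tin] E1.
      have [[h1 h2] _] := uLP t tin pt; have [[h3 h4] _] := uRP t' t'in pt'.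
      rewrite -E1 in h1 h2.
      have ett := close t t' (uR t') tin t'in (ltac:(lra)) (ltac:(lra)) (ltac:(lra)) (ltac:(lra)).
      by rewrite ett in h2; lra.
    + rewrite map_inj_in_uniq ?filter_uniq // => t t'.
      rewrite !mem_filter => /andP[pt tin] /andP[pt' t'in] E1.
      have [[h1 h2] _] := uRP t tin pt; have [[h3 h4] _] := uRP t' t'in pt'.
      by apply: (close t t' (uR t)) => //; lra.
  - by rewrite size_cat !size_map !size_filter.
  - move=> u; rewrite mem_cat => /orP[] /mapP[t]; rewrite mem_filter => /andP[pt tin] ->.
      have [[h1 h2] h3] := uLP t tin pt; split => //; apply: (Hr t tin); lra.
    have [[h1 h2] h3] := uRP t tin pt; split => //; apply: (Hr t tin); lra.
move=> t It Ft; apply/negP => /eqP dF; apply: nbad; exists t.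
have Qt := Qpos t It.
rewrite hF in Ft.
rewrite derivB derivZ hornerD hornerN hornerZ in dF.
have eH : H.[t] = c * Q.[t] by lra.
have eH' : H^`().[t] = c * Q^`().[t] by lra.
split.
- by rewrite /W !hornerE eH eH'; ring.
- by rewrite gt_eqF.
- exact: eH.
Qed.

Lemma diff_prod (R : realType) (V : normedModType R) (I : Type) (l : seq I) (F : I -> V -> R) x :
  (forall i, differentiable (F i) x) -> differentiable (fun y => \prod_(i <- l) F i y) x.
Proof.
elim: l => [|a l IH] HF.
  have -> : (fun y => \prod_(i <- [::]) F i y) = cst 1 by apply/funext => y; rewrite big_nil.
  exact: differentiable_cst.
have -> : (fun y => \prod_(i <- a :: l) F i y) = F a * (fun y => \prod_(i <- l) F i y).
  by apply/funext => y; rewrite big_cons.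
by apply: differentiableM => //; exact: IH.
Qed.

Section Net.
Variables (R : realType) (s m : nat) (alpha beta : 'M[nat]_(s, m)).
Local Notation NT := (stoich R alpha beta)^T.
Variables (j0 : 'I_m) (k0 : 'I_s).
Local Notation v := (row j0 NT).
Hypothesis hv0 : v 0 k0 != 0.
Hypothesis hrank : \rank (stoich R alpha beta) = 1%N.

Lemma v_neq0 : v != 0.
Proof. by apply/eqP => v0; move: hv0; rewrite v0 mxE eqxx. Qed.

Lemma NT_eqv : (NT :=: v)%MS.
Proof.
apply: eqmx_sym; apply/eqmxP.
case: (mxrank_leqif_eq (row_sub j0 NT)) => _ <-.
by rewrite mxrank_tr hrank rank_rV v_neq0.
Qed.

Definition cc (j : 'I_m) : R := row j NT 0 k0 / v 0 k0.

Lemma rowNT j : row j NT = cc j *: v.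
Proof.
have : (row j NT <= v)%MS by rewrite -NT_eqv row_sub.
move/sub_rVP => [a E]; rewrite /cc E [(a *: v) 0 k0]mxE mulfK //.
Qed.

Lemma cc_j0 : cc j0 = 1.
Proof. by rewrite /cc divff. Qed.

Definition gfun (kappa : 'rV[R]_m) (x : 'rV[R]_s) : R :=
  \sum_j (kappa 0 j * \prod_i x 0 i ^+ alpha i j) * cc j.

Lemma mass_g kappa x : massaction alpha beta kappa x = gfun kappa x *: v.
Proof.
rewrite /massaction mulmx_sum_row /gfun scaler_suml; apply: eq_bigr => j _.
by rewrite mxE (rowNT j) scalerA.
Qed.

Lemma in_S w : in_stoich_subspace alpha beta w <-> exists t, w = t *: v.
Proof.
rewrite /in_stoich_subspace; split.
  by rewrite NT_eqv => /sub_rVP.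
by move=> [t ->]; rewrite NT_eqv scalemx_sub.
Qed.

Definition Mp (x0 : 'rV[R]_s) (j : 'I_m) : {poly R} :=
  \prod_i ((x0 0 i)%:P + (v 0 i)%:P * 'X) ^+ alpha i j.

Definition Hp (kappa : 'rV[R]_m) (x0 : 'rV[R]_s) : {poly R} :=
  \sum_j (kappa 0 j * cc j) *: Mp x0 j.

Lemma Hp_horner kappa x0 t : (Hp kappa x0).[t] = gfun kappa (x0 + t *: v).
Proof.
rewrite /Hp /gfun horner_sum; apply: eq_bigr => j _.
rewrite hornerZ /Mp horner_prod mulrAC; congr (_ * _ * _).
apply: eq_bigr => i _; rewrite horner_exp !hornerE !mxE.
by rewrite mulrC.
Qed.

Definition Ipos (x0 : 'rV[R]_s) (t : R) := forall i, 0 < x0 0 i + t * v 0 i.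

Lemma pos_ssP kappa x0 x : pos_ss alpha beta kappa x0 x <->
  exists t, [/\ x = x0 + t *: v, Ipos x0 t & (Hp kappa x0).[t] = 0].
Proof.
split.
- move=> [[cl nn] [[_ st] pv]].
  have [t Et] := (in_S _).1 cl.
  have Ex : x = x0 + t *: v by rewrite -Et addrC subrK.
  exists t; split => //.
    by move=> i; have := pv i; rewrite Ex !mxE.
  move: st; rewrite mass_g => /eqP; rewrite scaler_eq0 (negbTE v_neq0) orbF => /eqP.
  by rewrite Hp_horner -Ex.
- move=> [t [-> It Ht]].
  have pv : pos_vec (x0 + t *: v) by move=> i; have := It i; rewrite !mxE.
  have nn : nonneg_vec (x0 + t *: v) by move=> i; exact: ltW (pv i).
  split; first split => //.
    by apply/in_S; exists t; rewrite addrAC subrr add0r.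
  split => //; split => //.
  by rewrite mass_g -Hp_horner Ht scale0r.
Qed.

Lemma Ipos_near x0 t : Ipos x0 t ->
  ev (fun r => forall u, t - r <= u -> u <= t + r -> Ipos x0 u).
Proof.
move=> It.
have : ev (fun r => forall i, i \in index_enum 'I_s ->
    forall u, t - r <= u -> u <= t + r -> 0 < x0 0 i + u * v 0 i).
  apply: ev_all => i _.
  have ai := It i.
  set a := x0 0 i + t * v 0 i in ai.
  have d0 : 0 < a / (`|v 0 i| + 1) by rewrite divr_gt0 // ltr_wpDl.
  apply: ev_imp (ev_lt d0) => r r0 rd u u1 u2.
  have rd' : r * (`|v 0 i| + 1) < a by rewrite -ltr_pdivlMr // ltr_wpDl.
  have h1 := ler_norm (v 0 i); have h2 : - v 0 i <= `|v 0 i| by rewrite -normrN ler_norm.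
  have h3 : 0 <= (r - (u - t)) * (`|v 0 i| - v 0 i) by apply: mulr_ge0; lra.
  have h4 : 0 <= (r + (u - t)) * (`|v 0 i| + v 0 i) by apply: mulr_ge0; lra.
  have h5 := normr_ge0 (v 0 i).
  have -> : x0 0 i + u * v 0 i = a + (u - t) * v 0 i by rewrite /a; ring.
  nra.
by apply: ev_imp => r _ H u u1 u2 i; apply: H => //; rewrite mem_index_enum.
Qed.

Lemma diff_mass (kappa : 'rV[R]_m) (x : 'rV[R]_s) : differentiable (massaction alpha beta kappa) x.
Proof.
have -> : massaction alpha beta kappa =
    \sum_(j < m) (fun y : 'rV[R]_s => (kappa 0 j * \prod_i y 0 i ^+ alpha i j) *: row j NT).
  apply/funext => y; rewrite fct_sumE /massaction mulmx_sum_row /=.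
  by apply: eq_bigr => j _; rewrite mxE.
apply: differentiable_sum => j; apply: differentiableZl.
have -> : (fun y : 'rV[R]_s => kappa 0 j * \prod_i y 0 i ^+ alpha i j) =
   (fun _ => kappa 0 j) * (fun y => \prod_i y 0 i ^+ alpha i j) by [].
apply: differentiableM; first exact: differentiable_cst.
apply: diff_prod => i; elim: (alpha i j) => [|n IH].
  have -> : (fun y : 'rV[R]_s => y 0 i ^+ 0) = cst 1 by apply/funext => y; rewrite expr0.
  exact: differentiable_cst.
have -> : (fun y : 'rV[R]_s => y 0 i ^+ n.+1) = (fun y : 'rV[R]_s => y 0 i) * (fun y => y 0 i ^+ n).
  by apply/funext => y; rewrite exprS.
by apply: differentiableM => //; apply: differentiable_coord.
Qed.

Lemma jacT (kappa : 'rV[R]_m) (x : 'rV[R]_s) : (jac (massaction alpha beta kappa) x)^T = jacobian (massaction alpha beta kappa) x.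
Proof.
apply/matrixP => k i; rewrite !mxE deriveE; last exact: diff_mass.
by [].
Qed.

Lemma Dv (kappa : 'rV[R]_m) (x0 : 'rV[R]_s) (t : R) : 'D_v (massaction alpha beta kappa) (x0 + t *: v) = (Hp kappa x0)^`().[t] *: v.
Proof.
pose G := fun u : R => (Hp kappa x0).[u] *: v.
have E : (fun h : R => h^-1 *: (massaction alpha beta kappa (h *: v + (x0 + t *: v)) - massaction alpha beta kappa (x0 + t *: v)))
   = (fun h : R => h^-1 *: (G (h *: 1 + t) - G t)).
  apply/funext => h; rewrite /G !mass_g !Hp_horner; congr (_ *: (_ *: v - _)).
  by congr gfun; rewrite scalerDl addrCA [h *: 1]mulr1.
have -> : 'D_v (massaction alpha beta kappa) (x0 + t *: v) = 'D_1 G t by rewrite /derive E.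
have dk : differentiable (horner (Hp kappa x0)) t by apply/derivable1_diffP; apply: derivable_horner.
rewrite deriveE; last exact: differentiableZl.
rewrite diffZl //; congr (_ *: _).
by rewrite -deriveE // -derive1E -derivE.
Qed.

Lemma nondegP (kappa : 'rV[R]_m) (x0 : 'rV[R]_s) (t : R) : (Hp kappa x0)^`().[t] != 0 ->
  Defs.nondegenerate alpha beta kappa (x0 + t *: v).
Proof.
move=> d0; rewrite /Defs.nondegenerate jacT.
apply/eqmxP; apply: eqmx_trans (eqmxMr _ NT_eqv) _.
rewrite -deriveEjacobian; last exact: diff_mass.
have E : 'D_v (massaction alpha beta kappa) (x0 + t *: v) = (Hp kappa x0)^`().[t] *: v by exact: Dv.
rewrite E.
exact: eqmx_trans (eqmx_scale _ d0) (eqmx_sym NT_eqv).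
Qed.

Lemma Qpos_lem x0 t : Ipos x0 t -> 0 < (Mp x0 j0).[t].
Proof.
move=> It; rewrite /Mp horner_prod; apply: prodr_gt0 => i _.
by rewrite horner_exp !hornerE exprn_gt0 // mulrC; exact: It i.
Qed.

Definition tof (x0 x : 'rV[R]_s) : R := (x - x0) 0 k0 / v 0 k0.

Lemma tofK x0 t : tof x0 (x0 + t *: v) = t.
Proof. by rewrite /tof addrAC subrr add0r [(t *: v) 0 k0]mxE mulfK. Qed.

Lemma part1 (n : nat) :
  (exists (kappa : 'rV[R]_m) (x0 : 'rV[R]_s), pos_rates kappa /\ has_card (pos_ss alpha beta kappa x0) n) ->
  (forall (kappa : 'rV[R]_m) (x0 : 'rV[R]_s), pos_rates kappa ->
     exists2 k, (k <= n)%N & has_card (pos_ss alpha beta kappa x0) k) ->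
  exists (kappa : 'rV[R]_m) (x0 : 'rV[R]_s), pos_rates kappa /\ has_card (nondeg_pos_ss alpha beta kappa x0) n.
Proof.
move=> [kap [x0 [kpos [l [ul sl Hl]]]]] Hup.
pose ts := [seq tof x0 x | x <- l].
have inl : forall x, x \in l -> exists t, [/\ x = x0 + t *: v, Ipos x0 t & (Hp kap x0).[t] = 0].
  by move=> x /Hl /pos_ssP.
have [c [cK [[us [uus sus Hus]] Hnd]]] :
    exists c, `|c| < kap 0 j0 /\
    (exists us : seq R, [/\ uniq us, (size ts <= size us)%N &
        forall u, u \in us -> Ipos x0 u /\ (Hp kap x0 - c *: Mp x0 j0).[u] = 0]) /\
    (forall t, Ipos x0 t -> (Hp kap x0 - c *: Mp x0 j0).[t] = 0 ->
       (Hp kap x0 - c *: Mp x0 j0)^`().[t] != 0).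
  apply: core.
  - exact: kpos.
  - exact: Ipos_near.
  - exact: Qpos_lem.
  - rewrite map_inj_in_uniq // => x y xl yl E.
    have [tx [Ex _ _]] := inl x xl; have [ty [Ey _ _]] := inl y yl.
    by move: E; rewrite Ex Ey !tofK => ->.
  - move=> t /mapP[x xl ->]; have [tx [-> It Ht]] := inl x xl.
    by rewrite tofK.
  - move=> t It Ht; have : pos_ss alpha beta kap x0 (x0 + t *: v).
      by apply/pos_ssP; exists t.
    move/Hl => xl; apply/mapP; exists (x0 + t *: v) => //.
    by rewrite tofK.
pose kap' : 'rV[R]_m := \row_j (kap 0 j - (if j == j0 then c else 0)).
have HpE : Hp kap' x0 = Hp kap x0 - c *: Mp x0 j0.
  rewrite /Hp (bigD1 j0) //= [in RHS](bigD1 j0) //= mxE eqxx cc_j0.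
  rewrite (eq_bigr (fun j => (kap 0 j * cc j) *: Mp x0 j)); last first.
    by move=> j /negbTE nj; rewrite mxE nj subr0.
  by rewrite !mulr1 scalerBl addrAC.
have kpos' : pos_rates kap'.
  move=> j; rewrite mxE; case: eqP => [->|_].
    by have := ler_norm c; have := kpos j0; lra.
  by rewrite subr0; exact: kpos.
exists kap', x0; split => //.
have [k kn [L [uL sL HL]]] := Hup kap' x0 kpos'.
have allnd : forall x, pos_ss alpha beta kap' x0 x -> Defs.nondegenerate alpha beta kap' x.
  move=> x /pos_ssP [t [-> It Ht]]; apply: nondegP.
  by rewrite HpE; apply: Hnd => //; rewrite -HpE.
have sub : {subset [seq x0 + u *: v | u <- us] <= L}.
  move=> x /mapP[u uin ->]; apply/HL/pos_ssP; exists u; split => //.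
    exact: (Hus u uin).1.
  by rewrite HpE; exact: (Hus u uin).2.
have uus' : uniq [seq x0 + u *: v | u <- us].
  by rewrite map_inj_uniq // => u u' E; rewrite -(tofK x0 u) E tofK.
have := uniq_leq_size uus' sub; rewrite size_map sL => usk.
have skn : size L = n.
  apply/eqP; rewrite eqn_leq sL kn /=.
  by apply: leq_trans usk; apply: leq_trans sus; rewrite size_map sl.
exists L; split => // x; split.
  by move=> [px _]; apply/HL.
by move=> xL; have px := (HL x).2 xL; split => //; exact: allnd.
Qed.

End Net.

Theorem theorem6p1 (R : realType) (s m : nat) (alpha beta : 'M[nat]_(s, m))
  (Hreac : forall j : 'I_m, col j alpha != col j beta)
  (Hdim1 : \rank (stoich R alpha beta) = 1%N)
  (n : nat) (Hcap : cap_is (@pos_ss R s m alpha beta) n) :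
  cap_is (@nondeg_pos_ss R s m alpha beta) n.
Proof.
have [Hex Hup] := Hcap.
split; last first.
  move=> kappa x0 kp; have [k kn [L [uL sL HL]]] := Hup kappa x0 kp.
  exists (count (fun x => `[< Defs.nondegenerate alpha beta kappa x >]) L).
    by apply: leq_trans (count_size _ _) _; rewrite sL.
  exists [seq x <- L | `[< Defs.nondegenerate alpha beta kappa x >]]; split.
  - exact: filter_uniq.
  - by rewrite size_filter.
  move=> x; rewrite mem_filter; split.
    by move=> [px nx]; apply/andP; split; [apply/asboolP | apply/HL].
  by move=> /andP[/asboolP nx /HL px].
have [j0 hj0] : exists j0, row j0 (stoich R alpha beta)^T != 0.
  apply: contrapT => Hn.
  have NT0 : (stoich R alpha beta)^T = 0.
    apply/row_matrixP => j; rewrite row0; apply: contrapT => hj; apply: Hn.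
    by exists j; apply/eqP.
  by move: Hdim1; rewrite -mxrank_tr NT0 mxrank0.
have [k0 hk0] : exists k0, row j0 (stoich R alpha beta)^T 0 k0 != 0.
  apply: contrapT => Hn; move: hj0; apply/negP; rewrite negbK; apply/eqP/rowP => k.
  rewrite [in RHS]mxE; apply: contrapT => hk; apply: Hn; exists k; exact/eqP.
exact: (@part1 R s m alpha beta j0 k0 hk0 Hdim1 n Hex Hup).
Qed.
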